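(* Let $F:\mathcal{H}\to\mathbb{R}$ be differentiable with $L$-Lipschitz gradient, $\arg\min F\ne\emptyset$, satisfying (PL) with $\mu>0$, and assume $\mu\le L$. Let $\delta>0$ and $$\alpha_\pm=\frac12\Big(\delta+\frac{3L}{\delta}\pm\sqrt{\Big(\delta+\frac L\delta\Big)^2-4\mu}\Big).$$ Let $\alpha\in\big(\frac L\delta,\alpha_-\big]\cup\big[\alpha_+,\delta+\frac{2L}\delta\big)$ with $\alpha\ne\frac13\big(\delta+\frac{4L}{\delta}\big)$, and let $x(\cdot)$ be the solution of the heavy ball system with damping $\alpha$ and initial point $x_0$. Then for all $t\ge0$, $$F(x(t))-F_*\le (F(x_0)-F_* )\Big(1+\frac{\delta+\frac{2L}{\delta}-\alpha}{\big|\delta+\frac{4L}\delta-3\alpha\big|}\Big)e^{-mt},\qquad m=\min\Big\{\delta+\frac{2L}\delta-\alpha,\ 2\Big(\alpha-\frac L\delta\Big)\Big\}.$$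
   Context: (PL) with constant $\mu>0$: $F(x)-F_*\le \frac{1}{2\mu}\|\nabla F(x)\|^2$ for all $x$, where $F_*=\min F$. Heavy ball system: $\ddot x(t)+\alpha\dot x(t)+\nabla F(x(t))=0$, $x(0)=x_0$, $\dot x(0)=0$ (unique $C^2$ global solution). *)

(* Defs.v *)
From HB Require Import structures.
From mathcomp Require Import all_boot all_order all_algebra.
From mathcomp Require Import all_classical all_reals all_analysis.
Set Implicit Arguments. Unset Strict Implicit. Unset Printing Implicit Defensive.
Import Order.TTheory GRing.Theory Num.Theory.
Import numFieldNormedType.Exports.
Local Open Scope ring_scope.

(* [ip] is a real inner product on H inducing the norm of H
   (symmetric, linear in the first argument, |x|^2 = <x,x>).
   Together with completeness of H this makes H a real Hilbert space. *)
Definition is_inner_product {R : realType} {H : normedModType R}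
  (ip : H -> H -> R) : Prop :=
  [/\ (forall x y, ip x y = ip y x),
      (forall (a : R) (x y z : H), ip (a *: x + y) z = a * ip x z + ip y z)
    & (forall x : H, `|x| ^+ 2 = ip x x)].

Definition is_gradient {R : realType} {H : normedModType R}
  (ip : H -> H -> R) (F : H -> R) (gradF : H -> H) : Prop :=
  forall x : H, differentiable F x /\ forall h : H, 'd F x h = ip (gradF x) h.

(* Main.v *)
Require Import Defs.
From HB Require Import structures.
From mathcomp Require Import all_boot all_order all_algebra.
From mathcomp Require Import all_classical all_reals all_analysis.
From mathcomp Require Import ring lra.
Import Order.TTheory GRing.Theory Num.Theory.
Import numFieldNormedType.Exports.
Local Open Scope classical_set_scope.
Local Open Scope ring_scope.



Section IP.
Context {R : realType} {H : normedModType R} (ip : H -> H -> R)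
  (hip : is_inner_product ip).

Lemma ipC x y : ip x y = ip y x.
Proof. by case: hip. Qed.
Lemma ipZDl a x y z : ip (a *: x + y) z = a * ip x z + ip y z.
Proof. by case: hip. Qed.
Lemma ipxx x : ip x x = `|x| ^+ 2.
Proof. by case: hip => _ _ ->. Qed.
Lemma ip0l z : ip 0 z = 0.
Proof. have := ipZDl 1 0 0 z; rewrite scaler0 addr0 mul1r; lra. Qed.
Lemma ipDl x y z : ip (x + y) z = ip x z + ip y z.
Proof. by rewrite -{1}[x]scale1r ipZDl mul1r. Qed.
Lemma ipZl a x z : ip (a *: x) z = a * ip x z.
Proof. by rewrite -[a *: x]addr0 ipZDl ip0l addr0. Qed.
Lemma ipNl x z : ip (- x) z = - ip x z.
Proof. by rewrite -scaleN1r ipZl mulN1r. Qed.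
Lemma ipBl x y z : ip (x - y) z = ip x z - ip y z.
Proof. by rewrite ipDl ipNl. Qed.
Lemma ipDr x y z : ip z (x + y) = ip z x + ip z y.
Proof. by rewrite ipC ipDl !(ipC z). Qed.
Lemma ipZr a x z : ip z (a *: x) = a * ip z x.
Proof. by rewrite ipC ipZl ipC. Qed.
Lemma ipNr x z : ip z (- x) = - ip z x.
Proof. by rewrite ipC ipNl ipC. Qed.
Lemma ipBr x y z : ip z (x - y) = ip z x - ip z y.
Proof. by rewrite ipDr ipNr. Qed.
Lemma ip0r z : ip z 0 = 0.
Proof. by rewrite ipC ip0l. Qed.

Lemma ip_le_half x y : ip x y <= `|x| * `|y|.
Proof.
set n := `|y|; set s := `|x|.
have h := normr_ge0 (n *: x - s *: y).
have e : ip (n *: x - s *: y) (n *: x - s *: y) =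
   n^+2 * s^+2 * 2 - 2 * n * s * ip x y.
  rewrite ipBl !ipBr !ipZl !ipZr !ipxx (ipC y x) -/n -/s; ring.
have : 0 <= n * s * (n * s - ip x y).
  have := sqr_ge0 `|n *: x - s *: y|; rewrite -ipxx e.
  move=> h2; nra.
have [ns0|nspos] := eqVneq (n * s) 0.
  move: ns0 => /eqP; rewrite mulf_eq0 => /orP[/eqP|/eqP].
    by rewrite /n => /normr0_eq0 ->; rewrite ip0r normr0 mulr0.
  by rewrite /s => /normr0_eq0 ->; rewrite ip0l normr0 mul0r.
have : 0 < n * s by rewrite lt_def nspos mulr_ge0 ?normr_ge0.
rewrite [n * s]mulrC; nra.
Qed.

Lemma ip_CS x y : `|ip x y| <= `|x| * `|y|.
Proof.
rewrite ler_norml ip_le_half andbT.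
by have := ip_le_half x (- y); rewrite ipNr normrN; lra.
Qed.

End IP.



Section IPcvg.
Context {R : realType} {H : normedModType R} (ip : H -> H -> R)
  (hip : is_inner_product ip).

Lemma cvg_ip {T} {F : set_system T} {FF : Filter F} (a b : T -> H) a0 b0 :
  a @ F --> a0 -> b @ F --> b0 ->
  (fun z => ip (a z) (b z)) @ F --> ip a0 b0.
Proof.
move=> ca cb.
have ca0 : (fun z => `|a z - a0|) @ F --> (0:R).
  by rewrite -(@normr0 _ H) -(subrr a0); apply: cvg_norm; apply: cvgB => //; exact: cvg_cst.
have cb0 : (fun z => `|b z - b0|) @ F --> (0:R).
  by rewrite -(@normr0 _ H) -(subrr b0); apply: cvg_norm; apply: cvgB => //; exact: cvg_cst.
have cbn : (fun z => `|b z|) @ F --> `|b0| by apply: cvg_norm.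
set hf := (fun z => `|a z - a0| * `|b z| + `|a0| * `|b z - b0|).
have key : \forall z \near F, cst 0 z <= `|ip (a z) (b z) - ip a0 b0| <= hf z.
  apply: nearW => z /=; rewrite normr_ge0 /=.
  have -> : ip (a z) (b z) - ip a0 b0 = ip (a z - a0) (b z) + ip a0 (b z - b0).
    rewrite (ipBl ip hip) (ipBr ip hip); ring.
  apply: (le_trans (ler_normD _ _)); apply: lerD; exact: (ip_CS ip hip).
have hc : hf @ F --> (0:R).
  have -> : (0:R) = 0 * `|b0| + `|a0| * 0 by rewrite mul0r mulr0 addr0.
  apply: cvgD; [apply: cvgM => //|apply: cvgM => //; exact: cvg_cst].
have hn := squeeze_cvgr key (cvg_cst _) hc.
apply/subr_cvg0; apply: norm_cvg0; exact: hn.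
Qed.

End IPcvg.



Section Dini.
Context {R : realType}.

Lemma dini_step (h : R -> R) (a b e : R) :
  0 < a -> a < b -> 0 < e ->
  (forall t, 0 < t -> {for t, continuous h}) ->
  (forall t, 0 < t -> forall e, 0 < e -> \forall s \near 0^'+, h (s + t) <= h t + e * s) ->
  h b <= h a + e * (b - a).
Proof.
move=> a0 ab e0 hc hd.
pose S := [set t : R | a <= t <= b /\ h t <= h a + e * (t - a)].
have Sa : S a by split; [rewrite lexx ltW | rewrite subrr mulr0 addr0].
have hs : has_sup S.
  split; first by exists a.
  by exists b => t [/andP[_ ->]].
set c := sup S.
have ac : a <= c by exact: sup_upper_bound.
have cb : c <= b by apply: ge_sup; [exists a | move=> t [/andP[_ ->]]].
have c0 : 0 < c by exact: (lt_le_trans a0 ac).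
have Sc : h c <= h a + e * (c - a).
  rewrite leNgt; apply/negP => hlt.
  have kc : (fun t => h t - e * t) @ c --> h c - e * c.
    apply: cvgB; first exact: hc.
    by apply: cvgM; [exact: cvg_cst | exact: cvg_id].
  have hlt2 : h a - e * a < h c - e * c by move: hlt; rewrite mulrBr; lra.
  have hn : \forall t \near c, h a - e * a < h t - e * t.
    by apply: (cvgr_gt (h c - e * c) kc).
  move: hn => /(iffLR (nbhs_normP _ _)) [eta eta0 Heta].
  have [t St ct] := sup_adherent eta0 hs.
  have tc : t <= c by exact: sup_upper_bound.
  have : h a - e * a < h t - e * t.
    apply: Heta; rewrite /ball_ /= ger0_norm; rewrite -/c in ct; lra.
  case: St => _; lra.
have cbe : c = b.
  apply/eqP; rewrite eq_le cb /=; rewrite leNgt; apply/negP => cltb.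
  have := hd c c0 e e0; move=> hdc.
  near (0:R)^'+ => s.
  have s0 : 0 < s by near: s; exact: nbhs_right_gt.
  have sb : s < b - c by near: s; apply: nbhs_right_lt; lra.
  have hs' : h (s + c) <= h c + e * s by near: s; exact: hdc.
  have : S (s + c).
    split; first by apply/andP; split; lra.
    lra.
  move=> /(sup_upper_bound hs); rewrite -/c; lra.
Unshelve. all: end_near.
by move: Sc; rewrite cbe.
Qed.

Lemma dini_bound (h : R -> R) (h0 : R) :
  h @ 0^'+ --> h0 ->
  (forall t, 0 < t -> {for t, continuous h}) ->
  (forall t, 0 < t -> forall e, 0 < e -> \forall s \near 0^'+, h (s + t) <= h t + e * s) ->
  forall t, 0 < t -> h t <= h0.
Proof.
move=> hl hc hd.
have step2 : forall a b, 0 < a -> a < b -> h b <= h a.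
  move=> a b a0 ab; apply/ler_addgt0Pr => e e0.
  have ba : 0 < b - a by lra.
  have := @dini_step h a b (e / (b - a)) a0 ab (divr_gt0 e0 ba) hc hd.
  by rewrite -mulrA mulVf ?mulr1 // gt_eqF.
move=> t t0; rewrite leNgt; apply/negP => lt.
near (0:R)^'+ => a.
have ha : h a < h t by near: a; apply: (cvgr_lt h0 hl).
have a0 : 0 < a by near: a; exact: nbhs_right_gt.
have at_ : a < t by near: a; exact: nbhs_right_lt.
have := step2 a t a0 at_; lra.
Unshelve. all: end_near.
Qed.

End Dini.



Section Calc.
Context {R : realType}.

Lemma dq_cvg {V : normedModType R} (f : R -> V) t : derivable f t 1 ->
  (fun s => s^-1 *: (f (s + t) - f t)) @ 0^'+ --> 'D_1 f t.
Proof.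
move=> df; apply: cvg_dnbhs_at_right.
have e : (fun s : R => s^-1 *: (f (s + t) - f t)) =
  (fun h => h^-1 *: ((f \o shift t) (h *: 1) - f t)).
  by apply: funext => s /=; rewrite [s *: 1]mulr1.
by rewrite e; exact: df.
Qed.

Lemma shift_cvg {V : normedModType R} (f : R -> V) t : {for t, continuous f} ->
  (fun s => f (s + t)) @ 0^'+ --> f t.
Proof.
move=> cf; apply: cvg_at_right_filter.
have hs : (fun s : R => s + t) @ 0 --> t.
  rewrite -{2}[t]add0r; apply: cvgD; [exact: cvg_id | exact: cvg_cst].
exact: (cvg_comp _ _ hs cf).
Qed.

Lemma expk_der (k t : R) : derivable (fun s => expR (k * s)) t 1 /\
  'D_1 (fun s => expR (k * s)) t = k * expR (k * t).
Proof.
have dl : derivable (k \*: id) t 1 by apply: derivableZ; exact: derivable_id.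
have dlv : 'D_1 (k \*: id) t = k.
  by rewrite deriveZ; [rewrite derive_id; exact: mulr1 | exact: derivable_id].
have dg : derivable expR ((k \*: id) t) 1 by exact: derivable_expR.
have e : (fun s => expR (k * s)) = expR \o (k \*: id) by apply: funext.
have dc : derivable (fun s => expR (k * s)) t 1.
  rewrite e; apply/derivable1_diffP; apply: differentiable_comp;
  by apply/derivable1_diffP.
split => //.
rewrite -derive1E e.
rewrite (derive1_comp dl dg).
rewrite !derive1E dlv.
have hD := congr1 (fun f => f ((k \*: id) t)) (derive_expR R).
rewrite /= in hD.
rewrite hD mulrC.
by rewrite -[t in expR (k *: t)]scaler1 scalerA scaler1.
Qed.

Lemma dini_of (h W : R -> R) (t w : R) :
  (\forall s \near 0^'+, s^-1 * (h (s + t) - h t) <= W s) ->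
  W @ 0^'+ --> w -> w <= 0 ->
  forall e, 0 < e -> \forall s \near 0^'+, h (s + t) <= h t + e * s.
Proof.
move=> hq hW w0 e e0.
have we : w < e by exact: (le_lt_trans w0 e0).
near=> s.
have s0 : 0 < s by near: s; exact: nbhs_right_gt.
have Ws : W s < e by near: s; exact: (cvgr_lt w hW).
have qs : s^-1 * (h (s + t) - h t) <= W s by near: s; exact: hq.
have : s^-1 * (h (s + t) - h t) < e by exact: (le_lt_trans qs Ws).
rewrite mulrC ltr_pdivrMr // => ?; lra.
Unshelve. all: end_near.
Qed.



End Calc.



Section Calc2.
Context {R : realType}.

Lemma lip_cont {V W : normedModType R} (f : V -> W) (L : R) :
  (forall y z, `|f y - f z| <= L * `|y - z|) -> forall y, {for y, continuous f}.
Proof.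
move=> hl y; apply/subr_cvg0; apply: norm_cvg0.
have key : \forall z \near y, cst 0 z <= `|f z - f y| <= L * `|z - y|.
  by apply: nearW => z /=; rewrite normr_ge0 hl.
have hc : (fun z => L * `|z - y|) @ y --> (0:R).
  rewrite -(mulr0 L); apply: cvgM; first exact: cvg_cst.
  rewrite -(@normr0 _ V) -(subrr y); apply: cvg_norm; apply: cvgB;
  [exact: cvg_id | exact: cvg_cst].
exact: (squeeze_cvgr key (cvg_cst _) hc).
Qed.

Lemma dq_cvgR (f : R -> R) t : derivable f t 1 ->
  (fun s => s^-1 * (f (s + t) - f t)) @ 0^'+ --> 'D_1 f t.
Proof.
move=> df; have := dq_cvg f t df.
have -> : (fun s : R => s^-1 *: (f (s + t) - f t)) =
          (fun s => s^-1 * (f (s + t) - f t)).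
  apply: funext => s.
  by rewrite -[X in _ *: X]scaler1 scalerA scaler1.
by [].
Qed.

Lemma expk_cont (k t : R) : {for t, continuous (fun s => expR (k * s))}.
Proof.
apply: differentiable_continuous; apply/derivable1_diffP.
exact: (expk_der k t).1.
Qed.

Lemma dq_exp (k t : R) :
  (fun s => s^-1 * (expR (k * (s + t)) - expR (k * t))) @ 0^'+ --> k * expR (k * t).
Proof.
have [d v] := expk_der k t.
rewrite -v; exact: (dq_cvgR (fun s => expR (k * s)) t d).
Qed.

End Calc2.



Section Fin.
Context {R : realType}.

Lemma final_ineq (r1 r2 t ph ph0 : R) : 0 < r1 -> 0 < r2 -> r1 - r2 != 0 ->
  0 <= t -> 0 <= ph0 ->
  expR (r1 * t) * ph - r1 * ph0 / (r1 - r2) * (expR ((r1 - r2) * t) - 1) <= ph0 ->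
  ph <= ph0 * (1 + r1 / `|r1 - r2|) * expR (- Num.min r1 r2 * t).
Proof.
move=> r1p r2p hD t0 p0 hk.
have Ap := expR_gt0 (r1 * t).
have [Dp|Dn] := ltrP 0 (r1 - r2).
- have m2 : Num.min r1 r2 = r2 by rewrite min_r //; lra.
  rewrite m2 ger0_norm; last exact: ltW.
  have eE : expR ((r1 - r2) * t) = expR (r1 * t) * expR (- r2 * t).
    by rewrite -expRD; congr expR; ring.
  have E1 : 1 <= expR ((r1 - r2) * t).
    by rewrite -expR0 ler_expR; apply: mulr_ge0 => //; exact: ltW.
  set cD := r1 / (r1 - r2).
  have cD0 : 0 <= cD by apply: divr_ge0; exact: ltW.
  have ec : r1 * ph0 / (r1 - r2) = ph0 * cD by rewrite /cD; field.
  rewrite ec eE in hk; rewrite eE in E1.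
  rewrite -(ler_pM2l Ap).
  set A := expR (r1 * t) in hk E1 Ap *; set M := expR (- r2 * t) in hk E1 *.
  have := mulr_ge0 p0 cD0; nra.
- have Dn' : r1 - r2 < 0 by rewrite lt_neqAle hD Dn.
  have m1 : Num.min r1 r2 = r1 by rewrite min_l //; lra.
  rewrite m1 ltr0_norm //.
  have E0 := expR_gt0 ((r1 - r2) * t).
  set cD := r1 / - (r1 - r2).
  have cD0 : 0 <= cD by apply: divr_ge0; lra.
  have ec : r1 * ph0 / (r1 - r2) = - (ph0 * cD) by rewrite /cD; field.
  rewrite ec in hk.
  have eM : expR (- r1 * t) = (expR (r1 * t))^-1 by rewrite mulNr expRN.
  rewrite eM -(ler_pM2l Ap) mulrCA divff ?gt_eqF // mulr1.
  have := mulr_ge0 (mulr_ge0 p0 cD0) (ltW E0); nra.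
Qed.

End Fin.



Theorem theorem6p1 (R : realType) (H : completeNormedModType R)
  (ip : H -> H -> R) (F : H -> R) (gradF : H -> H)
  (L mu delta alpha : R) (xstar x0 : H) (x : R -> H) :
  is_inner_product ip ->
  is_gradient ip F gradF ->
  (forall y z : H, `|gradF y - gradF z| <= L * `|y - z|) ->
  (forall y : H, F xstar <= F y) ->
  0 < mu ->
  (forall y : H, F y - F xstar <= (2 * mu)^-1 * `|gradF y| ^+ 2) ->
  mu <= L ->
  0 < delta ->
  (let alpham := (delta + 3 * L / delta
                  - Num.sqrt ((delta + L / delta) ^+ 2 - 4 * mu)) / 2 in
   let alphap := (delta + 3 * L / delta
                  + Num.sqrt ((delta + L / delta) ^+ 2 - 4 * mu)) / 2 in
   (L / delta < alpha <= alpham) \/ (alphap <= alpha < delta + 2 * L / delta)) ->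
  alpha != (delta + 4 * L / delta) / 3 ->
  (forall t, 0 < t -> derivable x t 1) ->
  (forall t, 0 < t -> derivable ('D_1 x) t 1) ->
  (forall t, 0 < t ->
     'D_1 ('D_1 x) t + alpha *: 'D_1 x t + gradF (x t) = 0) ->
  x 0 = x0 ->
  x @ 0^'+ --> x0 ->
  ('D_1 x) @ 0^'+ --> (0 : H) ->
  forall t : R, 0 <= t ->
    F (x t) - F xstar <=
      (F x0 - F xstar)
      * (1 + (delta + 2 * L / delta - alpha)
             / `|delta + 4 * L / delta - 3 * alpha|)
      * expR (- (Num.min (delta + 2 * L / delta - alpha)
                         (2 * (alpha - L / delta))) * t).
Proof.
move=> hip hgrad hlip hmin mu0 hpl muL d0 halpha hane hdx hdu hode hx0 hxlim hulim.
set l := L / delta.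
have eL : L = delta * l by rewrite /l mulrCA divff ?mulr1 // gt_eqF.
have e2 : 2 * L / delta = 2 * l by rewrite /l -mulrA.
have e3 : 3 * L / delta = 3 * l by rewrite /l -mulrA.
have e4 : 4 * L / delta = 4 * l by rewrite /l -mulrA.
rewrite e3 e2 /= in halpha.
rewrite e2 e4.
pose r1 := delta + 2 * l - alpha.
pose r2 := 2 * (alpha - l).
rewrite -/r1 -/r2.
have D0 : 0 <= (delta + l) ^+ 2 - 4 * mu.
  by have := sqr_ge0 (delta - l); move: muL; rewrite eL; nra.
have sq0 := sqrtr_ge0 ((delta + l) ^+ 2 - 4 * mu).
have sq2 := sqr_sqrtr D0.
set sq := Num.sqrt _ in halpha sq0 sq2.
have [r1pos [r2pos key]] : 0 < r1 /\ 0 < r2 /\ r1 * r2 <= 2 * mu.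
  case: halpha => /andP[h1 h2].
    have p1 : 0 <= (delta + 3 * l - sq) / 2 - alpha by lra.
    have p2 : 0 <= (delta + 3 * l + sq) / 2 - alpha by lra.
    have := mulr_ge0 p1 p2; rewrite /r1 /r2; nra.
  have p1 : 0 <= alpha - (delta + 3 * l - sq) / 2 by lra.
  have p2 : 0 <= alpha - (delta + 3 * l + sq) / 2 by lra.
  have := mulr_ge0 p1 p2; rewrite /r1 /r2; nra.
have e43 : delta + 4 * l - 3 * alpha = r1 - r2 by rewrite /r1 /r2; ring.
have hne : r1 - r2 != 0.
  apply/negP => /eqP E; move/negP: hane; apply; apply/eqP.
  rewrite e4; rewrite -e43 in E; lra.
rewrite e43.
have L0 : 0 <= L by lra.
pose u := 'D_1 x.
pose g := fun s => gradF (x s).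
pose phi := fun s => F (x s) - F xstar.
pose P := fun s => ip (u s) (u s).
pose Q := fun s => ip (u s) (g s).
pose C := fun s => r1 * phi s + Q s + delta / 2 * P s.
pose phi0 := F x0 - F xstar.
have phige0 : forall s, 0 <= phi s by move=> s; rewrite /phi subr_ge0.
have phi0ge0 : 0 <= phi0 by rewrite /phi0 subr_ge0.
have contF : forall y, {for y, continuous F}.
  by move=> y; apply: differentiable_continuous; exact: (hgrad y).1.
have contG : forall y, {for y, continuous gradF} by exact: lip_cont hlip.
have cx : forall s : R, 0 < s -> {for s, continuous x}.
  by move=> s hs; apply: differentiable_continuous; apply/derivable1_diffP; exact: hdx.
have cu : forall s : R, 0 < s -> {for s, continuous u}.
  by move=> s hs; apply: differentiable_continuous; apply/derivable1_diffP; exact: hdu.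
have cg : forall s : R, 0 < s -> {for s, continuous g}.
  by move=> s hs; exact: (continuous_comp (cx s hs) (contG _)).
have cphi : forall s : R, 0 < s -> {for s, continuous phi}.
  move=> s hs; apply: cvgB; last exact: cvg_cst.
  exact: (continuous_comp (cx s hs) (contF _)).
have cP : forall s : R, 0 < s -> {for s, continuous P}.
  by move=> s hs; apply: (cvg_ip ip hip); [exact: (cu s hs)|exact: (cu s hs)].
have cQ : forall s : R, 0 < s -> {for s, continuous Q}.
  by move=> s hs; apply: (cvg_ip ip hip); [exact: (cu s hs)|exact: (cg s hs)].
have cC : forall s : R, 0 < s -> {for s, continuous C}.
  move=> s hs; apply: cvgD; first apply: cvgD.
  - by apply: cvgM; [exact: cvg_cst | exact: cphi].
  - exact: cQ.
  - by apply: cvgM; [exact: cvg_cst | exact: cP].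
have lg : g @ 0^'+ --> gradF x0 by exact: (cvg_comp _ _ hxlim (contG x0)).
have lphi : phi @ 0^'+ --> phi0.
  apply: cvgB; last exact: cvg_cst.
  exact: (cvg_comp _ _ hxlim (contF x0)).
have lP : P @ 0^'+ --> 0.
  by have := @cvg_ip R H ip hip R _ _ u u 0 0 hulim hulim; rewrite (ip0l ip hip) => hh; exact: hh.
have lQ : Q @ 0^'+ --> 0.
  by have := @cvg_ip R H ip hip R _ _ u g 0 _ hulim lg; rewrite (ip0l ip hip) => hh; exact: hh.
have lC : C @ 0^'+ --> r1 * phi0.
  have -> : r1 * phi0 = r1 * phi0 + 0 + delta / 2 * 0 by rewrite mulr0 !addr0.
  apply: cvgD; first apply: cvgD.
  - by apply: cvgM; [exact: cvg_cst | exact: lphi].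
  - exact: lQ.
  - by apply: cvgM; [exact: cvg_cst | exact: lP].
have du' : forall s : R, 0 < s -> 'D_1 u s = - (alpha *: u s) - g s.
  move=> s hs; move: (hode s hs); rewrite -addrA => /eqP; rewrite addr_eq0 => /eqP ->.
  by rewrite opprD.
have dFx : forall s : R, 0 < s -> differentiable (F \o x) s.
  move=> s hs; apply: differentiable_comp; last exact: (hgrad _).1.
  by apply/derivable1_diffP; exact: hdx.
have vFx : forall s : R, 0 < s -> 'D_1 (F \o x) s = ip (g s) (u s).
  move=> s hs; rewrite deriveE; last exact: dFx.
  rewrite diff_comp; [|by apply/derivable1_diffP; exact: hdx|exact: (hgrad _).1].
  rewrite /= (hgrad (x s)).2 -deriveE //.
  by apply/derivable1_diffP; exact: hdx.
have lphiq : forall s : R, 0 < s ->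
    (fun r => r^-1 * (phi (r + s) - phi s)) @ 0^'+ --> ip (g s) (u s).
  move=> s hs; have := dq_cvgR (F \o x) s (diff_derivable (dFx s hs)).
  rewrite vFx //.
  have -> : (fun r => r^-1 * ((F \o x) (r + s) - (F \o x) s)) =
            (fun r => r^-1 * (phi (r + s) - phi s)).
    by apply: funext => r; rewrite /phi /=; congr (_ * _); ring.
  by [].
have hPL : forall s, 2 * mu * phi s <= `|g s| ^+ 2.
  move=> s; have := ler_wpM2l (ltW (mulr_gt0 (ltr0Sn _ 1) mu0)) (hpl (x s)).
  by rewrite mulrA divff ?mul1r // gt_eqF // mulr_gt0.
pose h1 := fun s => expR (r2 * s) * C s.
have st1 : forall s : R, 0 < s -> h1 s <= r1 * phi0.
  apply: dini_bound.
  - have -> : r1 * phi0 = 1 * (r1 * phi0) by rewrite mul1r.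
    apply: cvgM; last exact: lC.
    have := cvg_at_right_filter (expk_cont r2 0).
    by rewrite mulr0 expR0.
  - by move=> s hs; apply: cvgM; [exact: expk_cont | exact: cC].
  move=> s hs.
  pose dx := fun r : R => r^-1 *: (x (r + s) - x s).
  pose du := fun r : R => r^-1 *: (u (r + s) - u s).
  pose Er := fun r : R => expR (r2 * (r + s)).
  pose W := fun r : R => Er r * (r1 * (r^-1 * (phi (r + s) - phi s))
     + ip (du r) (g (r + s)) + `|u s| * L * `|dx r|
     + delta / 2 * (ip (du r) (u (r + s)) + ip (u s) (du r)))
     + C s * (r^-1 * (expR (r2 * (r + s)) - expR (r2 * s))).
  pose wv := expR (r2 * s) * (r1 * ip (g s) (u s) + ip ('D_1 u s) (g s)
     + `|u s| * L * `|u s|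
     + delta / 2 * (ip ('D_1 u s) (u s) + ip (u s) ('D_1 u s)))
     + C s * (r2 * expR (r2 * s)).
  apply: (dini_of h1 W s wv).
  - near=> r.
    have eQ : r^-1 * (Q (r + s) - Q s) =
        ip (du r) (g (r + s)) + ip (u s) (r^-1 *: (g (r + s) - g s)).
      rewrite /Q /du (ipZl ip hip) (ipZr ip hip) (ipBl ip hip) (ipBr ip hip); ring.
    have eP : r^-1 * (P (r + s) - P s) =
        ip (du r) (u (r + s)) + ip (u s) (du r).
      rewrite /P /du (ipZl ip hip) (ipZr ip hip) (ipBl ip hip) (ipBr ip hip); ring.
    have bnd : ip (u s) (r^-1 *: (g (r + s) - g s)) <= `|u s| * L * `|dx r|.
      apply: (le_trans (ip_le_half ip hip _ _)); rewrite -mulrA.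
      apply: ler_wpM2l; first exact: normr_ge0.
      rewrite /dx !normrZ mulrCA; apply: ler_wpM2l; first exact: normr_ge0.
      exact: hlip.
    have eh : r^-1 * (h1 (r + s) - h1 s) = Er r * (r^-1 * (C (r + s) - C s))
        + C s * (r^-1 * (Er r - expR (r2 * s))).
      rewrite /h1 /Er; ring.
    have eC : r^-1 * (C (r + s) - C s) = r1 * (r^-1 * (phi (r + s) - phi s))
        + r^-1 * (Q (r + s) - Q s) + delta / 2 * (r^-1 * (P (r + s) - P s)).
      rewrite /C; ring.
    rewrite eh eC eQ eP /W; apply: lerD => //.
    apply: ler_wpM2l; first exact/ltW/expR_gt0.
    lra.
  - have lx1 : dx @ 0^'+ --> u s by exact: (dq_cvg x s (hdx s hs)).
    have lu1 : du @ 0^'+ --> 'D_1 u s by exact: (dq_cvg u s (hdu s hs)).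
    have lgs : (fun r => g (r + s)) @ 0^'+ --> g s by exact: (shift_cvg g s (cg s hs)).
    have lus : (fun r => u (r + s)) @ 0^'+ --> u s by exact: (shift_cvg u s (cu s hs)).
    have lEs : Er @ 0^'+ --> expR (r2 * s).
      exact: (shift_cvg (fun r => expR (r2 * r)) s (expk_cont r2 s)).
    apply: cvgD; last by apply: cvgM; [exact: cvg_cst | exact: dq_exp].
    apply: cvgM; first exact: lEs.
    apply: cvgD; first apply: cvgD; first apply: cvgD.
    + by apply: cvgM; [exact: cvg_cst | exact: lphiq].
    + by apply: (cvg_ip ip hip); [exact: lu1 | exact: lgs].
    + by apply: cvgM; [exact: cvg_cst | exact: cvg_norm].
    + apply: cvgM; first exact: cvg_cst.
      by apply: cvgD; apply: (cvg_ip ip hip) => //; exact: cvg_cst.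
  - rewrite /wv (du' s hs).
    rewrite !(ipBl ip hip) !(ipBr ip hip) !(ipNl ip hip) !(ipNr ip hip).
    rewrite !(ipZl ip hip) !(ipZr ip hip) (ipC ip hip (g s) (u s)).
    have hG := hPL s; rewrite -(ipxx ip hip) in hG.
    have eu : `|u s| * L * `|u s| = L * P s by rewrite /P (ipxx ip hip); ring.
    rewrite eu /C -/(Q s) -/(P s).
    set Gv := ip (g s) (g s) in hG *.
    set Qv := Q s; set Pv := P s; set ph := phi s.
    have k0 : 0 <= 2 * mu - r1 * r2 by rewrite subr_ge0.
    have key2 := mulr_ge0 k0 (phige0 s).
    have E2 := expR_gt0 (r2 * s).
    have -> : expR (r2 * s) * (r1 * Qv + (- (alpha * Qv) - Gv) + L * Pv
       + delta / 2 * (- (alpha * Pv) - Qv + (- (alpha * Pv) - Qv)))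
       + (r1 * ph + Qv + delta / 2 * Pv) * (r2 * expR (r2 * s))
       = expR (r2 * s) * (r1 * r2 * ph - Gv).
      by rewrite /r1 /r2 eL; field.
    have hh : r1 * r2 * ph - Gv <= 0 by move: key2 hG; rewrite /ph; nra.
    by apply: mulr_ge0_le0 => //; exact: ltW.
Unshelve. all: end_near.
pose c := r1 * phi0 / (r1 - r2).
pose k := fun s => expR (r1 * s) * phi s - c * (expR ((r1 - r2) * s) - 1).
have st2 : forall s : R, 0 < s -> k s <= phi0.
  apply: dini_bound.
  - have -> : phi0 = 1 * phi0 - c * (1 - 1) by rewrite subrr mulr0 subr0 mul1r.
    apply: cvgB; apply: cvgM.
    + by have := cvg_at_right_filter (expk_cont r1 0); rewrite mulr0 expR0.
    + exact: lphi.
    + exact: cvg_cst.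
    + apply: cvgB; last exact: cvg_cst.
      by have := cvg_at_right_filter (expk_cont (r1 - r2) 0); rewrite mulr0 expR0.
  - move=> s hs; apply: cvgB; first by apply: cvgM; [exact: expk_cont | exact: cphi].
    apply: cvgM; first exact: cvg_cst.
    by apply: cvgB; [exact: expk_cont | exact: cvg_cst].
  move=> s hs.
  pose W := fun r : R => expR (r1 * (r + s)) * (r^-1 * (phi (r + s) - phi s))
     + phi s * (r^-1 * (expR (r1 * (r + s)) - expR (r1 * s)))
     - c * (r^-1 * (expR ((r1 - r2) * (r + s)) - expR ((r1 - r2) * s))).
  pose wv := expR (r1 * s) * ip (g s) (u s) + phi s * (r1 * expR (r1 * s))
     - c * ((r1 - r2) * expR ((r1 - r2) * s)).
  apply: (dini_of k W s wv).
  - by apply: nearW => r; rewrite /k /W le_eqVlt; apply/orP; left; apply/eqP; ring.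
  - apply: cvgB; last by apply: cvgM; [exact: cvg_cst | exact: dq_exp].
    apply: cvgD; last by apply: cvgM; [exact: cvg_cst | exact: dq_exp].
    apply: cvgM; last exact: lphiq.
    exact: (shift_cvg (fun r => expR (r1 * r)) s (expk_cont r1 s)).
  - have h1s := st1 s hs.
    have Bp := expR_gt0 (r2 * s).
    have Ap := expR_gt0 (r1 * s).
    have eE : expR ((r1 - r2) * s) = expR (r1 * s) * (expR (r2 * s))^-1.
      by rewrite mulrBl expRD expRN.
    have Pge : 0 <= P s by rewrite /P (ipxx ip hip) sqr_ge0.
    rewrite /wv eE (ipC ip hip (g s) (u s)) -/(Q s).
    have ec : c * (r1 - r2) = r1 * phi0 by rewrite /c; field.
    have -> : expR (r1 * s) * Q s + phi s * (r1 * expR (r1 * s)) -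
      c * ((r1 - r2) * (expR (r1 * s) * (expR (r2 * s))^-1)) =
      expR (r1 * s) * (expR (r2 * s))^-1 *
        (expR (r2 * s) * (Q s + r1 * phi s) - r1 * phi0).
      by rewrite /c; field; rewrite hne gt_eqF.
    rewrite /h1 /C in h1s.
    have iBp : 0 < (expR (r2 * s))^-1 by rewrite invr_gt0.
    have Zp := mulr_gt0 Ap iBp.
    have BP : 0 <= expR (r2 * s) * (delta / 2 * P s).
      by apply: mulr_ge0; [exact: ltW | apply: mulr_ge0 => //; lra].
    have hh : expR (r2 * s) * (Q s + r1 * phi s) - r1 * phi0 <= 0.
      move: h1s BP; rewrite !mulrDr; lra.
    by apply: mulr_ge0_le0 => //; exact: ltW.
Unshelve. all: end_near.
move=> t t0.
have [->|tpos] := eqVneq t 0.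
  rewrite mulr0 expR0 mulr1 hx0 -/phi0.
  have : 0 <= r1 / `|r1 - r2| by apply: divr_ge0; [exact: ltW | exact: normr_ge0].
  nra.
have tp : 0 < t by rewrite lt_neqAle eq_sym tpos t0.
have hf := @final_ineq R r1 r2 t (phi t) phi0 r1pos r2pos hne t0 phi0ge0 (st2 t tp).
exact hf.
Qed.
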